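(* Suppose that $S^{obs}$ is Minkowski-reduced in a broad sense and the Bravais class of $S$ is primitive rectangular. Then, under the assumption $\mathcal{A}_{2,1}$, $S$ is also Minkowski-reduced in a broad sense. In particular, $S$ is contained in the linear space $$ V_{rP} := \left\{\begin{pmatrix} s_{11} & 0 \\ 0 & s_{22} \end{pmatrix} : s_{11}, s_{22}\in \mathbb R \right\}. $$
   Context: $S$ denotes the true (unknown) $2$-by-$2$ positive-definite metric tensor (Gram matrix) of a 2D lattice basis, and $S^{obs}$ its observed value containing experimental errors. For symmetric $2$-by-$2$ matrices $S, T$, the inner product is $S \bullet T := \mathrm{Trace}(ST)$. A positive-definite symmetric $S$ is Minkowski-reduced in a broad sense if it is Venkov-reduced with respect to the identity $I_2$, i.e. $S \bullet I_2 \le (g S g^T) \bullet I_2$ for every $g \in GL_2(\mathbb Z)$. Assumption $\mathcal{A}_{2,1}$: if the $2$-by-$2$ metric tensor $S$ satisfies $S \bullet T \ge v^T S v$ for some nonzero $v \in \mathbb Z^2$ and some symmetric $2$-by-$2$ matrix $T$, then its observed value $S^{obs}$ also satisfies $S^{obs} \bullet T > 0$. Two lattices are in the same Bravais class if the automorphism groups $\{\sigma \in GL_2(\mathbb Z) : \sigma^T S \sigma = S\}$ of their metric tensors are conjugate in $GL_2(\mathbb Z)$; primitive rectangular is the Bravais class of a lattice with a reduced basis of two orthogonal vectors. *)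

(* Defs.v *)
From HB Require Import structures.
From mathcomp Require Import all_boot all_order all_algebra.
Set Implicit Arguments. Unset Strict Implicit. Unset Printing Implicit Defensive.
Import Order.TTheory GRing.Theory Num.Theory.
Local Open Scope ring_scope.

Section Defs.
Variable R : realFieldType.

Definition toR (m n : nat) (g : 'M[int]_(m, n)) : 'M[R]_(m, n) :=
  map_mx (fun z : int => z%:~R) g.

Definition GL2Z (g : 'M[int]_2) : bool := g \in unitmx.

Definition ip (S T : 'M[R]_2) : R := \tr (S *m T).

Definition sym_mx (S : 'M[R]_2) : Prop := S^T = S.

Definition qf (S : 'M[R]_2) (v : 'cV[int]_2) : R :=
  ((toR v)^T *m S *m toR v) 0 0.

Definition posdef (S : 'M[R]_2) : Prop :=
  sym_mx S /\ forall v : 'cV[R]_2, v != 0 -> 0 < (v^T *m S *m v) 0 0.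

(* Minkowski-reduced in a broad sense = Venkov-reduced w.r.t. I_2 *)
Definition minkowski_reduced_broad (S : 'M[R]_2) : Prop :=
  posdef S /\
  forall g : 'M[int]_2, GL2Z g ->
    ip S 1%:M <= ip (toR g *m S *m (toR g)^T) 1%:M.

Definition autS (S : 'M[R]_2) (s : 'M[int]_2) : Prop :=
  GL2Z s /\ (toR s)^T *m S *m toR s = S.

Definition same_bravais (S S' : 'M[R]_2) : Prop :=
  exists g : 'M[int]_2, GL2Z g /\
    forall s : 'M[int]_2, autS S s <-> autS S' (g *m s *m invmx g).

Definition primitive_rectangular (S : 'M[R]_2) : Prop :=
  exists a b : R, 0 < a /\ 0 < b /\ a != b /\
    same_bravais S (\matrix_(i, j) (if i == j then (if i == 0 then a else b) else 0)).

Definition assumption_A21 (S Sobs : 'M[R]_2) : Prop :=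
  forall (v : 'cV[int]_2) (T : 'M[R]_2), v != 0 -> sym_mx T ->
    qf S v <= ip S T -> 0 < ip Sobs T.

Definition in_VrP (S : 'M[R]_2) : Prop := S 0 1 = 0 /\ S 1 0 = 0.

End Defs.

(* Main.v *)
Require Import Defs.
From HB Require Import structures.
From mathcomp Require Import all_boot all_order all_algebra.
Import Order.TTheory GRing.Theory Num.Theory.
Local Open Scope ring_scope.
From mathcomp Require Import zify lra ring.
Lemma ord2P (i : 'I_2) : i = 0 \/ i = 1.
Proof. case: i => [[|[|k]]] Hi; [left|right|by []]; exact: val_inj. Qed.
Lemma big_ord2 (K : nmodType) (F : 'I_2 -> K) : \sum_(i < 2) F i = F 0 + F 1.
Proof. rewrite big_ord_recl big_ord1; congr (_ + F _); exact: val_inj. Qed.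
Section X. Variable R : realFieldType.
Lemma toRM (A B : 'M[int]_2) : toR R (A *m B) = toR R A *m toR R B.
Proof. by rewrite /toR map_mxM. Qed.
Lemma toRT (A : 'M[int]_2) : toR R A^T = (toR R A)^T.
Proof. by rewrite /toR map_trmx. Qed.
Lemma toR1 : toR R 1%:M = 1%:M :> 'M_2.
Proof. by rewrite /toR map_mx1. Qed.
Lemma ip1 (X : 'M[R]_2) : ip X 1%:M = \tr X.
Proof. by rewrite /ip mulmx1. Qed.
End X.
Lemma sq1 {z : int} : z != 0 -> 1 <= z * z. Proof. move=> /eqP h. nia. Qed.
Lemma rowfact (a b c d : int) : a*c + b*d = 1 -> (a*b = 0 /\ 1 <= a*a+b*b) \/ 2 <= a*a+b*b.
Proof. move=> E. case: (eqVneq a 0) => [a0|a0].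
  left; split; first by rewrite a0 mul0r. have b0 : b != 0.
    by apply/eqP=> b0; move: E; rewrite a0 b0 !mul0r addr0.
  have := sq1 b0; rewrite a0 mul0r add0r //.
case: (eqVneq b 0) => [b0|b0].
  left; split; first by rewrite b0 mulr0. have := sq1 a0; rewrite b0 mul0r addr0 //.
right; have := sq1 a0; have := sq1 b0. lia. Qed.
Lemma rowfactR (R : realFieldType) (a b c d : int) : a*c+b*d = 1 ->
  ((a%:~R:R) * b%:~R = 0 /\ 1 <= (a%:~R:R) * a%:~R + b%:~R * b%:~R) \/
  2 <= (a%:~R:R) * a%:~R + b%:~R * b%:~R.
Proof. move/rowfact => [[E1 E2]|E]; [left; split|right].
- by rewrite -intrM E1.
- by rewrite -!intrM -intrD ler1z.
- by rewrite -!intrM -intrD (_ : 2 = 2%:~R) // ler_int.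
Qed.
Lemma finstep (R : realFieldType) (m0 m1 x0 x1 y0 y1 : R) : 0 < m0 -> 0 < m1 ->
  (x0*x1 = 0 /\ 1 <= x0*x0+x1*x1) \/ 2 <= x0*x0+x1*x1 ->
  (y0*y1 = 0 /\ 1 <= y0*y0+y1*y1) \/ 2 <= y0*y0+y1*y1 ->
  m0 * (x0*x0+x1*x1) + m1 * (y0*y0+y1*y1) - (m0 + m1) < m0 ->
  m0 * (x0*x0+x1*x1) + m1 * (y0*y0+y1*y1) - (m0 + m1) < m1 ->
  x0 * x1 * m0 + y0 * y1 * m1 = 0.
Proof.
move=> p0 p1 hx hy t0 t1.
have hx1 : 1 <= x0*x0+x1*x1 by case: hx => [[]|] //; lra.
have hy1 : 1 <= y0*y0+y1*y1 by case: hy => [[]|] //; lra.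
have a1 := ler_wpM2l (ltW p0) hx1. have b1 := ler_wpM2l (ltW p1) hy1.
case: hx => [[->] _|hx]; last first.
  have := ler_wpM2l (ltW p0) hx. lra.
case: hy => [[->] _|hy]; first by rewrite !mul0r addr0.
have := ler_wpM2l (ltW p1) hy. lra.
Qed.
Lemma colnz (K : nzRingType) (A B : 'M[K]_2) j : A *m B = 1%:M -> col j B != 0.
Proof.
move=> E; apply/eqP => C.
have h0 : B 0 j = 0 by have := congr1 (fun X : 'M[K]_(2,1) => X 0 0) C; rewrite !mxE.
have h1 : B 1 j = 0 by have := congr1 (fun X : 'M[K]_(2,1) => X 1 0) C; rewrite !mxE.
have := congr1 (fun X : 'M[K]_2 => X j j) E; rewrite /= !mxE big_ord2 h0 h1 eqxx !mulr0 addr0.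
by move/eqP; rewrite eq_sym oner_eq0.
Qed.
Arguments colnz {K A B} j.
Arguments finstep {R m0 m1 x0 x1 y0 y1}.
Arguments rowfactR R {a b c d}.
Lemma finred (R : realFieldType) (d0 d1 x0 x1 y0 y1 : R) : 0 < d0 -> 0 < d1 ->
  1 <= x0*x0+x1*x1 -> 1 <= y0*y0+y1*y1 ->
  d0 + d1 <= d0 * (x0*x0+x1*x1) + d1 * (y0*y0+y1*y1).
Proof.
move=> p0 p1 hx hy. have := ler_wpM2l (ltW p0) hx. have := ler_wpM2l (ltW p1) hy. lra.
Qed.
Lemma one_le (R : realFieldType) (a b c d : int) : a*c+b*d = 1 ->
  1 <= (a%:~R:R) * a%:~R + b%:~R * b%:~R.
Proof. move/(rowfactR R) => [[_ //]|]. lra. Qed.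
Arguments one_le R {a b c d}.
Arguments finred {R d0 d1 x0 x1 y0 y1}.
Theorem mainTheorem2 (R : realFieldType) (S Sobs : 'M[R]_2) :
  posdef S -> sym_mx Sobs ->
  minkowski_reduced_broad Sobs ->
  primitive_rectangular S ->
  assumption_A21 S Sobs ->
  minkowski_reduced_broad S /\ in_VrP S.
Proof.
move=> HS HSo [_ Hred] [a [b [a0 [b0 [ab [g [Gg Hg]]]]]]] HA.
pose P := (\matrix_(i,j) (if i == j then (if i == 0 then 1 else -1) else 0) : 'M[int]_2).
have PP : P *m P = 1%:M.
  apply/matrixP => i j; rewrite !mxE !big_ord2 !mxE.
  by case: (ord2P i) => ->; case: (ord2P j) => ->.
have hg := mulVmx Gg; have gh := mulmxV Gg. set h := invmx g in hg gh.
have Hs: autS S (h *m P *m g).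
  apply/Hg. rewrite !mulmxA gh mul1mx -mulmxA gh mulmx1. split.
    by case: (mulmx1_unit PP).
  apply/matrixP => i j; rewrite !mxE !big_ord2 !mxE !big_ord2 !mxE.
  by case: (ord2P i) => ->; case: (ord2P j) => -> /=; ring.
case: Hs => _ Hs.
rewrite !toRM !trmx_mul in Hs.
set H := toR R h in Hs *; set G := toR R g in Hs *; set Q := toR R P in Hs *.
have HG : H *m G = 1%:M by rewrite /H /G -toRM hg toR1.
have GH : G *m H = 1%:M by rewrite /H /G -toRM gh toR1.
pose M := H^T *m S *m H.
have HM : Q^T *m M *m Q = M.
  rewrite /M -{2}Hs.
  by rewrite !mulmxA -(trmx_mul G H) GH trmx1 mul1mx -(mulmxA _ G H) GH mulmx1.
have M01 : M 0 1 = 0.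
  clearbody M; have := congr1 (fun X : 'M[R]_2 => X 0 1) HM.
  rewrite /Q /toR /= !mxE !big_ord2 !mxE !big_ord2 !mxE /=.
  rewrite ?mulr0z ?mulr1z ?mulrN1z; lra.
have Msym : M^T = M by rewrite /M !trmx_mul trmxK HS.1 mulmxA.
have M10 : M 1 0 = 0 by rewrite -Msym mxE.
have SM : S = G^T *m M *m G.
  by rewrite /M !mulmxA -(trmx_mul H G) HG trmx1 mul1mx -(mulmxA _ H G) HG mulmx1.
pose T := 1%:M - H *m H^T.
have symT : sym_mx T by rewrite /sym_mx /T linearB /= trmx1 trmx_mul trmxK.
have ipT : forall X, ip X T = \tr X - \tr (H^T *m X *m H).
  move=> X; rewrite /ip /T mulmxBr mulmx1 linearB /= mulmxA mxtrace_mulC mulmxA //.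
have obsT : ip Sobs T <= 0.
  have GT : GL2Z h^T by rewrite /GL2Z unitmx_tr; case: (mulmx1_unit gh).
  have := Hred _ GT; rewrite !ip1 toRT trmxK ipT -/H; lra.
have key : forall v, v != 0 -> \tr S - \tr M < qf S v.
  move=> v v0; rewrite ltNge; apply/negP => le.
  have := HA v T v0 symT; rewrite ipT -/M => /(_ le); lra.
have qfc : forall j, qf S (col j h) = M j j.
  move=> j; rewrite /qf /M /H /toR !mxE !big_ord2 !mxE !big_ord2 !mxE; ring.
have Mpos : forall j, 0 < M j j.
  move=> j; rewrite -qfc /qf; apply: HS.2.
  by rewrite /toR map_col; apply: (colnz j GH).
have tS : forall j, \tr S - \tr M < M j j by move=> j; rewrite -qfc; apply: key; apply: (colnz j gh).
have S01 : S 0 1 = 0.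
  have r0 : (g 0 0) * (h 0 0) + (g 0 1) * (h 1 0) = 1.
    by have := congr1 (fun X : 'M[int]_2 => X 0 0) gh; rewrite /= !mxE big_ord2.
  have r1 : (g 1 0) * (h 0 1) + (g 1 1) * (h 1 1) = 1.
    by have := congr1 (fun X : 'M[int]_2 => X 1 1) gh; rewrite /= !mxE big_ord2.
  have t0 := tS 0; have t1 := tS 1.
  rewrite {1 2}SM /mxtrace !big_ord2 in t0 t1.
  clearbody M.
  have F := finstep (Mpos 0) (Mpos 1) (rowfactR R r0) (rowfactR R r1).
  have etr : (G^T *m M *m G) 0 0 + (G^T *m M *m G) 1 1 =
     M 0 0 * ((g 0 0)%:~R * (g 0 0)%:~R + (g 0 1)%:~R * (g 0 1)%:~R) +
     M 1 1 * ((g 1 0)%:~R * (g 1 0)%:~R + (g 1 1)%:~R * (g 1 1)%:~R).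
    rewrite /G /toR !mxE !big_ord2 !mxE !big_ord2 !mxE M01 M10; ring.
  rewrite etr in t0 t1.
  rewrite SM /G /toR !mxE !big_ord2 !mxE !big_ord2 !mxE M01 M10.
  apply: (etrans _ (F t0 t1)); ring.
have S10 : S 1 0 = 0 by rewrite -HS.1 mxE.
split; last by [].
split; first exact: HS.
have dpos : forall j, 0 < S j j.
  move=> j; have := HS.2 _ (colnz j (mulmx1 (1%:M : 'M[R]_2))).
  by rewrite !mxE !big_ord2 !mxE !big_ord2 !mxE; case: (ord2P j) => -> /=; rewrite ?mulr0 ?mul0r ?mulr1 ?add0r ?addr0 ?mul1r.
move=> k Gk; rewrite !ip1.
have kk := mulVmx Gk.
have c0 : k 0 0 * (invmx k) 0 0 + k 1 0 * (invmx k) 0 1 = 1.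
  by have := congr1 (fun X : 'M[int]_2 => X 0 0) kk; rewrite /= !mxE big_ord2 mulrC [k 1 0 * _]mulrC.
have c1 : k 0 1 * (invmx k) 1 0 + k 1 1 * (invmx k) 1 1 = 1.
  by have := congr1 (fun X : 'M[int]_2 => X 1 1) kk; rewrite /= !mxE big_ord2 mulrC [k 1 1 * _]mulrC.
have := finred (dpos 0) (dpos 1) (one_le R c0) (one_le R c1).
rewrite /mxtrace !big_ord2 /toR !mxE !big_ord2 !mxE !big_ord2 !mxE S01 S10.
move=> le; apply: (le_trans le); rewrite le_eqVlt; apply/orP; left; apply/eqP; ring.
Qed.
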